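(* Let $\bar x \in \mathrm{dom}\,\psi$, let $A>0$, and let $T = T_A(\bar x)$. Then for all $y \in \mathrm{dom}\,\psi$, $$M_A(\bar x, y) \;\geq\; M_A(\bar x) + \tfrac12 \langle \nabla^2 f(\bar x)(y - T), y - T\rangle + \tfrac12 \sigma A \|y - T\|^2 .$$ Moreover, $$\|T_A(\bar x) - \bar x\| \;\leq\; \frac{1}{\sigma A}\, \|F'(\bar x)\|_*,$$ where $F'(\bar x) = \nabla f(\bar x) + \psi'(\bar x)$ and $\psi'(\bar x)$ is an arbitrary element of $\partial\psi(\bar x)$.
   Context: $\mathbb{E}$ is a finite-dimensional real vector space with an arbitrary norm $\|\cdot\|$; $\mathbb{E}^*$ is its dual space with dual norm $\|g\|_* = \max\{\langle g, x\rangle : \|x\|\le 1\}$. We consider $F(x) = f(x) + \psi(x)$, where $\psi$ is a closed convex function with $\mathrm{dom}\,\psi \subseteq \mathbb{E}$ and $f$ is a convex, twice continuously differentiable function. The scaling function $d$ is differentiable and satisfies, for some $\sigma \in (0,1]$ and all $x, y \in \mathrm{dom}\,\psi$: $d(y) \ge d(x) + \langle \nabla d(x), y - x\rangle + \frac{\sigma}{2}\|y-x\|^2$ and $\|\nabla d(x) - \nabla d(y)\|_* \le \|x - y\|$. The Bregman distance is $\rho(x,y) = d(y) - d(x) - \langle \nabla d(x), y - x\rangle$. For $\bar x \in \mathrm{dom}\,\psi$ and $A > 0$ define $$M_A(\bar x, y) = f(\bar x) + \langle \nabla f(\bar x), y - \bar x\rangle + \tfrac12\langle \nabla^2 f(\bar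 x)(y-\bar x), y - \bar x\rangle + A\rho(\bar x, y) + \psi(y),$$ $T_A(\bar x) = \arg\min_{y \in \mathrm{dom}\,\psi} M_A(\bar x, y)$, and $M_A(\bar x) = M_A(\bar x, T_A(\bar x))$. *)

(* Defs.v *)
From HB Require Import structures.
From mathcomp Require Import all_boot all_order all_algebra.
From mathcomp Require Import all_classical all_reals all_analysis.
Set Implicit Arguments. Unset Strict Implicit. Unset Printing Implicit Defensive.
Import Order.TTheory GRing.Theory Num.Theory.
Import numFieldNormedType.Exports.
Local Open Scope classical_set_scope.
Local Open Scope ring_scope.

(* The space E is modelled as 'rV[R]_n (finite dimensional real vector space);
   the dual space E^* is identified with 'rV[R]_n via the standard pairing
   <g, x> = \sum_i g_i x_i. *)
Definition pairing (R : realType) (n : nat) (g x : 'rV[R]_n) : R :=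
  \sum_(i < n) g ord0 i * x ord0 i.

Definition is_norm (R : realType) (n : nat) (N : 'rV[R]_n -> R) : Prop :=
  [/\ forall x, 0 <= N x,
      forall x, N x = 0 -> x = 0,
      forall (a : R) x, N (a *: x) = `|a| * N x
    & forall x y, N (x + y) <= N x + N y].

Definition dual_norm (R : realType) (n : nat) (N : 'rV[R]_n -> R) (g : 'rV[R]_n) : R :=
  sup [set pairing g x | x in [set x | N x <= 1]].

Definition hess_app (R : realType) (n : nat) (H : 'M[R]_n) (v : 'rV[R]_n) : 'rV[R]_n :=
  v *m H.

Definition convex_fun (R : realType) (n : nat) (f : 'rV[R]_n -> R) : Prop :=
  forall x y (t : R), 0 <= t <= 1 ->
    f (t *: x + (1 - t) *: y) <= t * f x + (1 - t) * f y.

Definition dom (R : realType) (n : nat) (psi : 'rV[R]_n -> \bar R) : set 'rV[R]_n :=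
  [set x | (psi x < +oo)%E].

Definition proper_closed_convex (R : realType) (n : nat) (psi : 'rV[R]_n -> \bar R) : Prop :=
  [/\ forall x, (-oo < psi x)%E,
      exists x, (psi x < +oo)%E,
      closed [set p : 'rV[R]_n * R | (psi p.1 <= p.2%:E)%E]
    & forall (x y : 'rV[R]_n) (t : R), 0 < t < 1 ->
        (psi ((t *: x + (1 - t) *: y)%R) <= t%:E * psi x + (1 - t)%:E * psi y)%E].

Definition subdiff (R : realType) (n : nat) (psi : 'rV[R]_n -> \bar R) (x : 'rV[R]_n)
  : set 'rV[R]_n :=
  [set g | forall y : 'rV[R]_n, (psi x + (pairing g (y - x)%R)%:E <= psi y)%E].

Definition bregman (R : realType) (n : nat) (d : 'rV[R]_n -> R) (gd : 'rV[R]_n -> 'rV[R]_n)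
  (x y : 'rV[R]_n) : R :=
  d y - d x - pairing (gd x) (y - x).

Definition model (R : realType) (n : nat) (f : 'rV[R]_n -> R) (gf : 'rV[R]_n -> 'rV[R]_n)
  (Hf : 'rV[R]_n -> 'M[R]_n) (d : 'rV[R]_n -> R) (gd : 'rV[R]_n -> 'rV[R]_n)
  (psi : 'rV[R]_n -> \bar R) (A : R) (xb y : 'rV[R]_n) : \bar R :=
  ((f xb + pairing (gf xb) (y - xb)
    + 2^-1 * pairing (hess_app (Hf xb) (y - xb)) (y - xb)
    + A * bregman d gd xb y)%:E + psi y)%E.

(* Main.v *)
Require Import Defs.
From HB Require Import structures.
From mathcomp Require Import all_boot all_order all_algebra.
From mathcomp Require Import all_classical all_reals all_analysis.
From mathcomp Require Import ring lra.
Import Order.TTheory GRing.Theory Num.Theory.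
Import numFieldNormedType.Exports.
Local Open Scope classical_set_scope.
Local Open Scope ring_scope.
Set Implicit Arguments. Unset Strict Implicit.

Section H.
Variables (R : realType) (n : nat).
Implicit Types (g x y : 'rV[R]_n).

Lemma pairingDl g1 g2 x : pairing (g1 + g2) x = pairing g1 x + pairing g2 x.
Proof. rewrite /pairing -big_split; apply: eq_bigr => i _; rewrite !mxE /=; ring. Qed.
Lemma pairingDr g x1 x2 : pairing g (x1 + x2) = pairing g x1 + pairing g x2.
Proof. rewrite /pairing -big_split; apply: eq_bigr => i _; rewrite !mxE /=; ring. Qed.
Lemma pairingNl g x : pairing (- g) x = - pairing g x.
Proof. rewrite /pairing -sumrN; apply: eq_bigr => i _; rewrite !mxE /=; ring. Qed.
Lemma pairingNr g x : pairing g (- x) = - pairing g x.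
Proof. rewrite /pairing -sumrN; apply: eq_bigr => i _; rewrite !mxE /=; ring. Qed.
Lemma pairingZl a g x : pairing (a *: g) x = a * pairing g x.
Proof. rewrite /pairing mulr_sumr; apply: eq_bigr => i _; rewrite !mxE /=; ring. Qed.
Lemma pairingZr a g x : pairing g (a *: x) = a * pairing g x.
Proof. rewrite /pairing mulr_sumr; apply: eq_bigr => i _; rewrite !mxE /=; ring. Qed.
Lemma pairing0r g : pairing g 0 = 0.
Proof. by rewrite -(scale0r (0 : 'rV[R]_n)) pairingZr mul0r. Qed.

Lemma right_lim_ge (h : R -> R) l c :
  h @ 0^' --> l -> (forall t, 0 < t < 1 -> c <= h t) -> c <= l.
Proof.
move=> hl hc.
have hr : h @ 0^'+ --> l.
  move=> A /hl /nbhs_ballP [_ /posnumP[e] xe_A].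
  by exists e%:num => //= y xe_y /gt_eqF/negbT/xe_A; exact.
apply: (cvgr_to_ge hr); near=> t; apply: hc; apply/andP; split.
  by near: t; exact: nbhs_right_gt.
by near: t; exact: nbhs_right_lt.
Unshelve. all: by end_near. Qed.


Lemma dir_cvg (W : normedModType R) (phi : 'rV[R]_n -> W) a v :
  differentiable phi a ->
  (fun h : R => h^-1 *: (phi (h *: v + a) - phi a)) @ 0^' --> 'd phi a v.
Proof.
move=> dphi; rewrite -deriveE //.
have := @diff_derivable _ _ _ phi a v dphi; rewrite /derivable /derive => c.
exact: c.
Qed.

Lemma dir_ge (phi : 'rV[R]_n -> R) a v c :
  differentiable phi a ->
  (forall t, 0 < t < 1 -> t * c <= phi (a + t *: v) - phi a) -> c <= 'd phi a v.
Proof.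
move=> dphi hc; have hl := @dir_cvg R^o phi a v dphi; apply: (right_lim_ge hl) => t /andP[t0 t1].
rewrite -[X in _ <= X]/(t^-1 * _) ler_pdivlMl //. rewrite [t *: v + a]addrC; by apply: hc; rewrite t0 t1.
Qed.

Lemma dir_le (phi : 'rV[R]_n -> R) a v c :
  differentiable phi a ->
  (forall t, 0 < t < 1 -> phi (a + t *: v) - phi a <= t * c) -> 'd phi a v <= c.
Proof.
move=> dphi hc; rewrite -lerN2.
have dN : differentiable (fun x => - phi x) a by apply: differentiableN.
have := @dir_ge (fun x => - phi x) a v (- c) dN.
rewrite diffN //= => -> // t tt; have := hc t tt; lra.
Qed.


Lemma coord_le (x : 'rV[R]_n) i : `|x ord0 i| <= `|x|.
Proof.
by rewrite [leRHS]/Num.norm /= mx_normrE; apply/bigmax_geP; right => /=; exists (ord0, i).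
Qed.

Section NormN.
Variable N : 'rV[R]_n -> R.
Hypothesis hN : is_norm N.

Lemma N0 : N 0 = 0.
Proof. case: hN => _ _ hZ _. by rewrite -(scale0r (0 : 'rV[R]_n)) hZ normr0 mul0r. Qed.

Lemma NN x : N (- x) = N x.
Proof. case: hN => _ _ hZ _. by rewrite -scaleN1r hZ normrN normr1 mul1r. Qed.

Lemma N_sum (I : Type) (r : seq I) (F : I -> 'rV[R]_n) :
  N (\sum_(i <- r) F i) <= \sum_(i <- r) N (F i).
Proof.
case: hN => _ _ _ hT.
elim/big_rec2: _ => [|i y1 y2 _ IH]; first by rewrite N0.
exact: le_trans (hT _ _) (lerD (lexx _) IH).
Qed.

Definition KN := \sum_(i < n) N (delta_mx ord0 i).

Lemma N_ub x : N x <= KN * `|x|.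
Proof.
case: hN => hge _ hZ _.
rewrite [x in N x]row_sum_delta; apply: le_trans (N_sum _ _) _.
rewrite /KN mulr_suml; apply: ler_sum => i _; rewrite hZ mulrC.
by apply: ler_wpM2l; [exact: hge | exact: coord_le].
Qed.

Lemma N_cont : continuous N.
Proof.
case: hN => hge _ hZ hT.
have K0 : 0 <= KN by apply: sumr_ge0 => i _; exact: hge.
move=> x; apply/(@cvgrPdist_lt _ _ _ _ (nbhs_filter x)) => e e0.
apply/nbhs_ballP; exists (e / (KN + 1)); first by apply: divr_gt0 => //; rewrite ltr_wpDl.
move=> y; rewrite -ball_normE /= => B.
have h1 : N x <= N y + N (x - y) by have := hT (x - y) y; rewrite subrK; lra.
have h2 : N y <= N x + N (x - y).
  by have := hT (y - x) x; rewrite subrK -opprB NN; lra.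
have h3 : N (x - y) <= KN * `|x - y| by exact: N_ub.
have h4 : KN * `|x - y| < e.
  apply: le_lt_trans (_ : (KN + 1) * `|x - y| < e).
    by apply: ler_wpM2r => //; rewrite lerDl.
  by rewrite -ltr_pdivlMl ?ltr_wpDl // mulrC.
rewrite ltr_norml; apply/andP; split; lra.
Qed.


Lemma N_lb : exists2 c, 0 < c & forall x, c * `|x| <= N x.
Proof.
have [hge hz hZ hT] := hN.
set S := [set x : 'rV[R]_n | `|x| = 1].
have inS x : x != 0 -> S (`|x|^-1 *: x).
  move=> x0; rewrite /S /= normrZ ger0_norm ?invr_ge0 // mulVf //.
  by rewrite normr_eq0.
have [S0|S0] := pselect (S !=set0); last first.
  exists 1 => // x; case: (eqVneq x 0) => [->|x0].
    by rewrite normr0 mulr0 hge.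
  by exfalso; apply: S0; exists (`|x|^-1 *: x); exact: inS.
have cS : compact S.
  apply: (@bounded_closed_compact R n S).
    by exists 1; split => // M M1 x /= ->; exact: ltW.
  apply: (@preimage_closed _ _ (fun x : 'rV[R]_n => `|x|) [set 1]); last exact: closed_eq.
  by move=> ? _; exact: norm_continuous.
have [c0 Sc0 hmin] := EVT_min_rV S0 cS (continuous_subspaceT N_cont).
have c00 : c0 != 0.
  apply/eqP => c00; move: Sc0; rewrite inE /S /= c00 normr0 => /eqP.
  by rewrite eq_sym oner_eq0.
have Nc0 : 0 < N c0.
  rewrite lt_def hge andbT; apply/eqP => /hz; exact/eqP.
exists (N c0) => // x; case: (eqVneq x 0) => [->|x0].
  by rewrite normr0 mulr0 hge.
have := hmin _ (mem_set (inS x x0)).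
rewrite hZ ger0_norm ?invr_ge0 // => h.
have nx : 0 < `|x| by rewrite normr_gt0.
rewrite mulrC -ler_pdivlMl // mulrC.
Qed.


Lemma pair_bound G x : pairing G x <= (\sum_i `|G ord0 i|) * `|x|.
Proof.
rewrite /pairing mulr_suml; apply: ler_sum => i _.
apply: le_trans (ler_norm _) _; rewrite normrM.
by apply: ler_wpM2l => //; exact: coord_le.
Qed.

Lemma dual_has_sup G : has_sup [set pairing G x | x in [set x | N x <= 1]].
Proof.
have [hge hz hZ hT] := hN.
have [c c0 hc] := N_lb.
split; first by exists (pairing G 0), 0 => //=; rewrite N0.
exists ((\sum_i `|G ord0 i|) / c) => _ [x /= Nx <-].
apply: le_trans (pair_bound G x) _.
apply: ler_wpM2l; first by apply: sumr_ge0.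
rewrite -[leRHS]mul1r ler_pdivlMr //; rewrite mulrC; exact: le_trans (hc x) Nx.
Qed.

Lemma dual_ge0 G : 0 <= dual_norm N G.
Proof.
apply: (sup_upper_bound (dual_has_sup G)).
by exists 0 => //=; rewrite ?N0 ?pairing0r.
Qed.

Lemma dual_pair G x : pairing G x <= dual_norm N G * N x.
Proof.
have [hge hz hZ hT] := hN.
case: (eqVneq (N x) 0) => [/hz ->|nx0].
  by rewrite pairing0r N0 mulr0.
have nx : 0 < N x by rewrite lt_def nx0 hge.
have h : pairing G ((N x)^-1 *: x) <= dual_norm N G.
  apply: (sup_upper_bound (dual_has_sup G)).
  exists ((N x)^-1 *: x) => //=.
  by rewrite hZ ger0_norm ?invr_ge0 ?hge // mulVf.
move: h; rewrite pairingZr => h; have := ler_wpM2r (ltW nx) h; by rewrite mulrAC mulVf // mul1r.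
Qed.

End NormN.


Lemma pair_cont (u : 'rV[R]_n) : continuous (fun g : 'rV[R]_n => pairing g u).
Proof.
rewrite /pairing.
apply: (@continuous_big R^o _ +%R 0 (fun _ => true)).
  exact: add_continuous.
move=> i _ g; apply: cvgMl. all: try exact: nbhs_filter. exact: (@coord_continuous R 1 n ord0 i g).
Qed.

Lemma vecE1 (x y : 'rV[R]_n) (t : R) : x + t *: (y - x) = t *: y + (1 - t) *: x.
Proof. by apply/rowP => i; rewrite !mxE /=; ring. Qed.

Section Convex.
Variables (f : 'rV[R]_n -> R) (gf : 'rV[R]_n -> 'rV[R]_n) (Hf : 'rV[R]_n -> 'M[R]_n).
Hypothesis cf : convex_fun f.
Hypothesis df : forall x, differentiable f x /\ ('d f x : 'rV[R]_n -> R) = pairing (gf x).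
Hypothesis dgf : forall x, differentiable gf x /\ ('d gf x : 'rV[R]_n -> 'rV[R]_n) = hess_app (Hf x).

Lemma grad_ineq x y : f x + pairing (gf x) (y - x) <= f y.
Proof.
have [dfx e] := df x.
have := @dir_le f x (y - x) (f y - f x) dfx.
rewrite e => h; suff: pairing (gf x) (y - x) <= f y - f x by lra.
apply: h => t /andP[t0 t1]; rewrite vecE1.
have := cf y x (t:=t); rewrite (ltW t0) (ltW t1) => /(_ isT) h; lra.
Qed.

Lemma grad_mono x y : 0 <= pairing (gf y - gf x) (y - x).
Proof.
have h1 := grad_ineq x y; have h2 := grad_ineq y x.
rewrite pairingDl pairingNl -opprB pairingNr in h2 *; lra.
Qed.

Lemma hess_psd x u : 0 <= pairing (u *m Hf x) u.
Proof.
have [dgx e] := dgf x.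
have hl := @dir_cvg 'rV[R]_n gf x u dgx.
have hl2 := cvg_comp _ _ hl (@pair_cont u ('d gf x u)).
rewrite e /hess_app in hl2.
apply: (right_lim_ge hl2) => t /andP[t0 t1] /=.
rewrite pairingZl; apply: mulr_ge0; first by rewrite invr_ge0 ltW.
have := grad_mono x (t *: u + x).
by rewrite addrK pairingZr pmulr_rge0.
Qed.

End Convex.

End H.

Definition Sm (R : realType) (n : nat) (f : 'rV[R]_n -> R) (gf : 'rV[R]_n -> 'rV[R]_n)
  (Hf : 'rV[R]_n -> 'M[R]_n) (d : 'rV[R]_n -> R) (gd : 'rV[R]_n -> 'rV[R]_n)
  (A : R) (xb y : 'rV[R]_n) : R :=
  f xb + pairing (gf xb) (y - xb)
    + 2^-1 * pairing (hess_app (Hf xb) (y - xb)) (y - xb)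
    + A * bregman d gd xb y.

Lemma modelE (R : realType) (n : nat) f gf Hf d gd (psi : 'rV[R]_n -> \bar R) A xb y :
  model f gf Hf d gd psi A xb y = ((Sm f gf Hf d gd A xb y)%:E + psi y)%E.
Proof. by []. Qed.

Lemma Sm_expand (R : realType) (n : nat) f gf Hf d gd (A : R) (xb T h : 'rV[R]_n) t :
  Sm f gf Hf d gd A xb (T + t *: h) =
  Sm f gf Hf d gd A xb T
  + t * (pairing (gf xb) h + 2^-1 * (pairing (h *m Hf xb) (T - xb) + pairing ((T - xb) *m Hf xb) h)
         - A * pairing (gd xb) h)
  + t ^+ 2 / 2 * pairing (h *m Hf xb) h + A * (d (T + t *: h) - d T).
Proof.
rewrite /Sm /bregman /hess_app.
have -> : T + t *: h - xb = (T - xb) + t *: h by apply/rowP => i; rewrite !mxE /=; ring.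
rewrite mulmxDl -scalemxAl !pairingDl !pairingDr !pairingZl !pairingZr.
ring.
Qed.

Lemma Sm_xb (R : realType) (n : nat) f gf Hf d gd (A : R) (xb : 'rV[R]_n) :
  Sm f gf Hf d gd A xb xb = f xb.
Proof.
rewrite /Sm /bregman /hess_app subrr mul0mx !pairing0r; ring.
Qed.
Lemma psi_fin (R : realType) (n : nat) (psi : 'rV[R]_n -> \bar R) z :
  (forall x, (-oo < psi x)%E) -> z \in dom psi -> exists r, psi z = r%:E.
Proof.
move=> h1; rewrite inE /dom /=; move: (h1 z).
by case: (psi z) => // r _ _; exists r.
Qed.

Unset Implicit Arguments.

Theorem lemma1 (R : realType) (n : nat) (N : 'rV[R]_n -> R)
  (f : 'rV[R]_n -> R) (gf : 'rV[R]_n -> 'rV[R]_n) (Hf : 'rV[R]_n -> 'M[R]_n)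
  (psi : 'rV[R]_n -> \bar R)
  (d : 'rV[R]_n -> R) (gd : 'rV[R]_n -> 'rV[R]_n) (sigma : R)
  (xb : 'rV[R]_n) (A : R) (T : 'rV[R]_n) :
  is_norm N ->
  (* f convex, twice continuously differentiable, gradient gf, Hessian Hf *)
  convex_fun f ->
  (forall x, differentiable f x /\ ('d f x : 'rV[R]_n -> R) = pairing (gf x)) ->
  (forall x, differentiable gf x /\ ('d gf x : 'rV[R]_n -> 'rV[R]_n) = hess_app (Hf x)) ->
  continuous Hf ->
  (* psi closed convex *)
  proper_closed_convex psi ->
  (* scaling function d *)
  0 < sigma <= 1 ->
  (forall x, differentiable d x /\ ('d d x : 'rV[R]_n -> R) = pairing (gd x)) ->
  (forall x y, x \in dom psi -> y \in dom psi ->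
     d x + pairing (gd x) (y - x) + sigma / 2 * N (y - x) ^+ 2 <= d y) ->
  (forall x y, x \in dom psi -> y \in dom psi ->
     dual_norm N (gd x - gd y) <= N (x - y)) ->
  xb \in dom psi -> 0 < A ->
  (* T = T_A(xb) : the minimizer of M_A(xb, .) over dom psi *)
  T \in dom psi ->
  (forall y, y \in dom psi -> (model f gf Hf d gd psi A xb T <= model f gf Hf d gd psi A xb y)%E) ->
  (forall y, y \in dom psi ->
     (model f gf Hf d gd psi A xb T
       + (2^-1 * pairing (hess_app (Hf xb) (y - T)) (y - T)
          + 2^-1 * sigma * A * N (y - T) ^+ 2)%:E
      <= model f gf Hf d gd psi A xb y)%E)
  /\ (forall g, g \in subdiff psi xb ->
        N (T - xb) <= (sigma * A)^-1 * dual_norm N (gf xb + g)).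
Proof.
move=> hN hcf hdf hdgf _ [hninf _ _ hcvx] /andP[s0 s1] hdd hsc _ hxb hA hT hmin.
set S := Sm f gf Hf d gd A xb.
have [pT epT] := psi_fin hninf hT.
have part1 : forall y, y \in dom psi ->
    (model f gf Hf d gd psi A xb T
       + (2^-1 * pairing (hess_app (Hf xb) (y - T)) (y - T)
          + 2^-1 * sigma * A * N (y - T) ^+ 2)%:E
      <= model f gf Hf d gd psi A xb y)%E.
  move=> y hy; have [py epy] := psi_fin hninf hy.
  rewrite !modelE epT epy -!EFinD lee_fin /hess_app.
  set h := y - T.
  set L := pairing (gf xb) h + 2^-1 * (pairing (h *m Hf xb) (T - xb) + pairing ((T - xb) *m Hf xb) h)
         - A * pairing (gd xb) h.
  set Q := pairing (h *m Hf xb) h.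
  have [ddT eT] := hdd T.
  set D := pairing (gd T) h.
  have key : - (L + py - pT) <= A * D.
    have hl := @dir_cvg _ _ R^o d T h ddT.
    rewrite eT -/D in hl.
    set k := Q / (2 * A).
    have hid : (fun t : R => t * k) @ 0^' --> 0 * k.
      apply: cvgMl; exact: cvg_within_filter cvg_id.
    have hl3 : (fun t : R => t^-1 * (d (t *: h + T) - d T) + t * k) @ 0^' --> D + 0 * k.
      by apply: cvgD.
    have c0 : - (L + py - pT) / A <= D + 0 * k.
      apply: (right_lim_ge hl3) => t /andP[t0 t1] /=.
      rewrite [t *: h + T]addrC.
      have cv := hcvx y T t; rewrite t0 t1 -vecE1 epy epT -EFinM -EFinM -EFinD in cv.
      have cv' := cv isT.
      have hz : T + t *: h \in dom psi.
        by rewrite inE /dom /=; apply: le_lt_trans cv' _; exact: ltry.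
      have [pz epz] := psi_fin hninf hz.
      rewrite epz lee_fin in cv'.
      have hm := hmin _ hz; rewrite !modelE epT epz -!EFinD lee_fin in hm.
      have ex := Sm_expand f gf Hf d gd A xb T h t.
      rewrite -/S -/L -/Q in ex.
      rewrite -/S ex in hm.
      have ineq : - (L + py - pT) * t <= A * (d (T + t *: h) - d T) + t ^+ 2 / 2 * Q.
        nra.
      rewrite -(ler_pM2r (mulr_gt0 hA t0)).
      have E1 : - (L + py - pT) / A * (A * t) = - (L + py - pT) * t.
        by field; rewrite gt_eqF.
      have E2 : (t^-1 * (d (T + t *: h) - d T) + t * k) * (A * t)
          = A * (d (T + t *: h) - d T) + t ^+ 2 / 2 * Q.
        by rewrite /k; field; rewrite ?gt_eqF.
      by rewrite E1 E2.
    rewrite mul0r addr0 ler_pdivrMr // in c0; lra.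
  have e1 : y = T + 1 *: h by rewrite scale1r /h addrC subrK.
  have := Sm_expand f gf Hf d gd A xb T h 1.
  rewrite -e1 -/S expr1n mul1r => ->.
  have sc := hsc T y hT hy; rewrite -/h -/D in sc.
  have sc2 : A * (d T + D + sigma / 2 * N h ^+ 2) <= A * d y.
    by rewrite ler_pM2l.
  rewrite -/L -/Q; lra.
split => // g; rewrite inE /subdiff /= => hg.
have [px epx] := psi_fin hninf hxb.
have hgT := hg T; rewrite epx epT -EFinD lee_fin in hgT.
have p1 := part1 xb hxb; rewrite !modelE epT epx -!EFinD lee_fin Sm_xb in p1.
set u := T - xb in hgT p1 *.
have exu : xb - T = - u by rewrite /u opprB.
rewrite /Sm /bregman /hess_app -/u exu mulNmx pairingNl pairingNr opprK (NN hN) in p1.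
have sc := hsc xb T hxb hT; rewrite -/u in sc.
have sc2 : A * (d xb + pairing (gd xb) u + sigma / 2 * N u ^+ 2) <= A * d T.
  by rewrite ler_pM2l.
have psd := hess_psd hcf hdf hdgf xb u.
have dp := dual_pair hN (gf xb + g) (- u).
rewrite pairingNr pairingDl (NN hN) in dp.
have key : sigma * A * N u ^+ 2 <= dual_norm N (gf xb + g) * N u by nra.
have [hge hz _ _] := hN.
have dg0 := dual_ge0 hN (gf xb + g).
have sA : 0 < sigma * A by apply: mulr_gt0.
case: (eqVneq (N u) 0) => [->|nu0].
  by apply: mulr_ge0 => //; rewrite invr_ge0 ltW.
have nu : 0 < N u by rewrite lt_def nu0 hge.
rewrite ler_pdivlMl // -(ler_pM2r nu); nra.
Qed.
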